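(* For every integer $t\ge 1$ and every even integer $j$, the limit $$g_{22}(t,j)=\lim_{L\to\infty,\ L\text{ even}}\mathbb{E}_L\big[(h^{2t+2}_j-h^{2t}_j)(h^2_0-h^0_0)\big]$$ exists and $$g_{22}(t,j)=-\tfrac14\big[g_{11}(t-1,j)-g_{11}(t,j)\big],$$ where $g_{11}(s,j)=\frac{2^{-2s+1}(2s)!}{(s-\frac{j}{2})!(s+\frac{j}{2})!}$ for $|j|\le 2s$ and $g_{11}(s,j)=0$ for $|j|>2s$ (for $s\ge0$, $j$ even).
   Context: Let $L\ge 2$ be an even integer and index sites by $i\in\mathbb{Z}/L\mathbb{Z}$. The initial interface $h^0$ is ''distributed'' according to the un-normalized measure $\mu(dh^0)=\prod_i e^{-\frac12(h^0_{i+1}-h^0_i)^2}\,dh^0_i$; concretely, only height differences are meaningful and the increment vector $(h^0_{i+1}-h^0_i)_i$ has the law of i.i.d. standard Gaussians conditioned on having sum zero. Dynamics: for $t\ge1$, independently for each $i$ with $i+t$ even, $h^t_i=\tfrac12(h^{t-1}_{i-1}+h^{t-1}_{i+1})+\xi^t_i$ with $\xi^t_i$ independent centered Gaussians of variance $1/2$; $h^t_i=h^{t-1}_i$ for $i+t$ odd. $\mathbb{E}_L$ is expectation for this process on $\mathbb{Z}/L\mathbb{Z}$. *)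

(* Defs.v *)
From Stdlib Require Import Reals Arith ZArith Lia.
Open Scope R_scope.

(* A centered Gaussian "random variable" in the span of the sources, represented
   by its coefficients:
   - fst : coefficients on the initial heights h^0_k (k < L),
   - snd : coefficients on the noises xi^u_v (time u >= 1, site v < L). *)
Definition form := ((nat -> R) * (nat -> nat -> R))%type.

Definition fsub (X Y : form) : form :=
  (fun k => fst X k - fst Y k, fun u v => snd X u v - snd Y u v).

(* h^t_i as a linear form, for i a site index (taken mod L). *)
Fixpoint hf (L t i : nat) : form :=
  match t with
  | O => (fun k => if Nat.eqb k (i mod L) then 1 else 0, fun _ _ => 0)
  | S s =>
      if Nat.even (i mod L + S s) then
        let X1 := hf L s (i mod L + L - 1) in
        let X2 := hf L s (i mod L + 1) in
        (fun k => (fst X1 k + fst X2 k) / 2,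
         fun u v => (snd X1 u v + snd X2 u v) / 2
                    + (if andb (Nat.eqb u (S s)) (Nat.eqb v (i mod L)) then 1 else 0))
      else hf L s i
  end.

Definition hZ (L t : nat) (j : Z) : form :=
  hf L t (Z.to_nat (Z.modulo j (Z.of_nat L))).

Fixpoint sumR (n : nat) (f : nat -> R) : R :=
  match n with O => 0 | S m => sumR m f + f m end.

(* sum_i a_i h^0_i = (sum a) h^0_0 + sum_k eta_k * cum a k, with
   eta_k = h^0_{k+1} - h^0_k (k = 0..L-1), cum a k = sum_{k < i < L} a_i. *)
Definition cum (L : nat) (a : nat -> R) (k : nat) : R :=
  sumR L (fun i => if Nat.ltb k i then a i else 0).

(* E_L[X Y] for X, Y whose h^0-coefficients sum to zero (so that they are
   functions of height differences only) and whose noise coefficients vanish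
   after time N.  Increments: i.i.d. N(0,1) conditioned on sum zero, i.e.
   Cov(eta_k, eta_l) = delta_kl - 1/L; noises independent, variance 1/2. *)
Definition EL (L N : nat) (X Y : form) : R :=
  sumR L (fun k => sumR L (fun l =>
     cum L (fst X) k * cum L (fst Y) l *
     ((if Nat.eqb k l then 1 else 0) - / INR L)))
  + sumR N (fun u => sumR L (fun v => / 2 * snd X (S u) v * snd Y (S u) v)).

Definition g11 (s : nat) (j : Z) : R :=
  if Z.leb (Z.abs j) (2 * Z.of_nat s) then
    2 * INR (fact (2 * s)) /
    (4 ^ s * INR (fact (Z.to_nat (Z.of_nat s - j / 2)))
           * INR (fact (Z.to_nat (Z.of_nat s + j / 2))))
  else 0.

(* Main.v *)
Require Import Defs.
From Stdlib Require Import Reals Arith ZArith.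
From Stdlib Require Import Lia Lra.
Open Scope R_scope.


Lemma sumR_ext n f g : (forall i, (i < n)%nat -> f i = g i) -> sumR n f = sumR n g.
Proof. induction n; simpl; intros H; [reflexivity|]. rewrite IHn by (intros; apply H; lia). rewrite H by lia. reflexivity. Qed.

Lemma sumR_plus n f g : sumR n (fun i => f i + g i) = sumR n f + sumR n g.
Proof. induction n; simpl; [lra|]. rewrite IHn; lra. Qed.

Lemma sumR_scal n c f : sumR n (fun i => c * f i) = c * sumR n f.
Proof. induction n; simpl; [lra|]. rewrite IHn; lra. Qed.

Lemma sumR_const n c : sumR n (fun _ => c) = INR n * c.
Proof. induction n; simpl sumR; [simpl; lra|]. rewrite IHn, S_INR; lra. Qed.

Lemma sumR_ind n p f : (p < n)%nat -> sumR n (fun i => if Nat.eqb i p then f i else 0) = f p.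
Proof. induction n; intros H; [lia|]. simpl. destruct (Nat.eqb_spec n p).
 - subst. rewrite (sumR_ext _ _ (fun _ => 0)). rewrite sumR_const; lra.
   intros i Hi. destruct (Nat.eqb_spec i p); [lia|auto].
 - rewrite IHn by lia. lra.
Qed.

Lemma sumR_trunc n p f : (p <= n)%nat -> sumR n (fun i => if Nat.ltb i p then f i else 0) = sumR p f.
Proof. induction n; intros H.
 - replace p with 0%nat by lia. reflexivity.
 - destruct (Nat.eq_dec p (S n)).
   + subst. simpl. rewrite (sumR_ext _ _ f). destruct (Nat.ltb_spec n (S n)); [reflexivity|lia].
     intros i Hi. destruct (Nat.ltb_spec i (S n)); [reflexivity|lia].
   + simpl. rewrite IHn by lia. destruct (Nat.ltb_spec n p); [lia|lra].
Qed.

Lemma sumR_swap n m f : sumR n (fun i => sumR m (fun k => f i k)) = sumR m (fun k => sumR n (fun i => f i k)).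
Proof. induction n; simpl.
 - rewrite sumR_const; lra.
 - rewrite IHn, <- sumR_plus. reflexivity.
Qed.

Definition ind (b : bool) : R := if b then 1 else 0.

Fixpoint GZ (b : Z -> R) (g : nat -> Z -> R) (T : nat) (x : Z) : R :=
  match T with
  | O => b x
  | S s => if Z.even (x + Z.of_nat (S s)) then (GZ b g s (x - 1) + GZ b g s (x + 1)) / 2 + g (S s) x
           else GZ b g s x
  end.

Lemma GZ_supp b g : (forall x, (1 < Z.abs x)%Z -> b x = 0) -> (forall u x, (1 < Z.abs x)%Z -> g u x = 0) ->
  forall T x, (Z.of_nat T + 1 < Z.abs x)%Z -> GZ b g T x = 0.
Proof. intros Hb Hg. induction T; intros x Hx; simpl GZ.
 - apply Hb. lia.
 - rewrite Hg by lia. destruct (Z.even _).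
   + rewrite !IHT by lia. lra.
   + apply IHT; lia.
Qed.

Lemma Zeven_nat n : Z.even (Z.of_nat n) = Nat.even n.
Proof. induction n; [reflexivity|]. rewrite Nat2Z.inj_succ, Z.even_succ, <- Z.negb_even, IHn.
 rewrite Nat.even_succ, <- Nat.negb_even. reflexivity. Qed.


Definition srr (h r : nat) : Z := if Nat.leb r h then Z.of_nat r else (Z.of_nat r - Z.of_nat (2*h))%Z.
Definition sr (h i : nat) : Z := srr h (i mod (2*h)).

Lemma modlt h i : (1 <= h)%nat -> (i mod (2*h) < 2*h)%nat.
Proof. intros. apply Nat.mod_upper_bound. lia. Qed.

Lemma sr_small h r : (r < 2*h)%nat -> sr h r = srr h r.
Proof. intros. unfold sr. rewrite Nat.mod_small by lia. reflexivity. Qed.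

Lemma sr_par h i k : (1 <= h)%nat -> Nat.even (i mod (2*h) + k) = Z.even (sr h i + Z.of_nat k).
Proof. intros Hh. unfold sr, srr. set (r := i mod (2*h)).
 destruct (Nat.leb_spec r h).
 - rewrite <- Nat2Z.inj_add, Zeven_nat. reflexivity.
 - replace (Z.of_nat r - Z.of_nat (2*h) + Z.of_nat k)%Z with (Z.of_nat (r + k) - 2 * Z.of_nat h)%Z by lia.
   rewrite Z.even_sub, Zeven_nat, Z.even_mul. simpl. destruct (Nat.even (r+k)); reflexivity.
Qed.

Lemma sr_pred h i : (2 <= h)%nat ->
  sr h (i mod (2*h) + 2*h - 1) = (sr h i - 1)%Z \/
  ((Z.of_nat h - 1 <= Z.abs (sr h (i mod (2*h) + 2*h - 1)))%Z /\ (Z.of_nat h - 1 <= Z.abs (sr h i - 1))%Z).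
Proof. intros Hh. pose proof (modlt h i ltac:(lia)) as Hr. unfold sr at 2. set (r := i mod (2*h)) in *.
 destruct (Nat.eq_dec r 0) as [E|E].
 - rewrite E. rewrite sr_small by lia. unfold srr. left.
   destruct (Nat.leb_spec (0 + 2*h - 1) h); destruct (Nat.leb_spec 0 h); lia.
 - assert (Hm : ((r + 2*h - 1) mod (2*h) = r - 1)%nat).
   { replace (r + 2*h - 1)%nat with ((r - 1) + 1 * (2*h))%nat by lia.
     rewrite Nat.Div0.mod_add. apply Nat.mod_small. lia. }
   unfold sr. rewrite Hm. unfold srr. fold r.
   destruct (Nat.leb_spec (r-1) h); destruct (Nat.leb_spec r h); lia.
Qed.

Lemma sr_succ h i : (2 <= h)%nat ->
  sr h (i mod (2*h) + 1) = (sr h i + 1)%Z \/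
  ((Z.of_nat h - 1 <= Z.abs (sr h (i mod (2*h) + 1)))%Z /\ (Z.of_nat h - 1 <= Z.abs (sr h i + 1))%Z).
Proof. intros Hh. pose proof (modlt h i ltac:(lia)) as Hr. change (sr h i) with (srr h (i mod (2*h))).
 set (r := i mod (2*h)) in *.
 destruct (Nat.eq_dec (r+1) (2*h)) as [E|E].
 - unfold sr. rewrite E, Nat.Div0.mod_same. unfold srr.
   destruct (Nat.leb_spec 0 h); destruct (Nat.leb_spec r h); lia.
 - rewrite sr_small by lia. unfold srr.
   destruct (Nat.leb_spec (r+1) h); destruct (Nat.leb_spec r h); lia.
Qed.

Lemma lift (h : nat) (M : nat -> nat -> R) (b : Z -> R) (g : nat -> Z -> R) :
  (forall i, M 0%nat i = b (sr h i)) ->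
  (forall s i, M (S s) i = if Nat.even (i mod (2*h) + S s)
       then (M s (i mod (2*h) + 2*h - 1)%nat + M s (i mod (2*h) + 1)%nat)/2 + g (S s) (sr h i) else M s i) ->
  (forall x, (1 < Z.abs x)%Z -> b x = 0) -> (forall u x, (1 < Z.abs x)%Z -> g u x = 0) ->
  forall T, (T + 3 <= h)%nat -> forall i, M T i = GZ b g T (sr h i).
Proof. intros H0 HS Hb Hg. induction T; intros Hh i.
 - apply H0.
 - rewrite HS. cbn [GZ]. rewrite sr_par by lia.
   destruct (Z.even _); [|apply IHT; lia].
   rewrite !IHT by lia. f_equal. f_equal. f_equal.
   + destruct (sr_pred h i ltac:(lia)) as [E|[E1 E2]]; [rewrite E; reflexivity|].
     rewrite !(GZ_supp b g Hb Hg) by lia. reflexivity.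
   + destruct (sr_succ h i ltac:(lia)) as [E|[E1 E2]]; [rewrite E; reflexivity|].
     rewrite !(GZ_supp b g Hb Hg) by lia. reflexivity.
Qed.


Definition K := GZ (fun x => ind (Z.eqb x 0)) (fun _ _ => 0).
Definition N2 := GZ (fun _ => 0) (fun u x => ind (Nat.eqb u 2 && Z.eqb x 0)).
Definition N1 := GZ (fun _ => 0) (fun u x => ind (Nat.eqb u 1) * (ind (Z.eqb x 1) + ind (Z.eqb x (-1))) / 2).

Lemma par2 x n : Z.even (x + Z.of_nat (S (S n))) = Z.even (x + Z.of_nat n).
Proof. rewrite !Nat2Z.inj_succ. replace (x + Z.succ (Z.succ (Z.of_nat n)))%Z with ((x + Z.of_nat n) + 2)%Z by lia.
 rewrite Z.even_add. simpl. destruct (Z.even _); reflexivity. Qed.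

Ltac parsimp := rewrite ?Z.even_add, ?Z.even_sub; cbn [Z.even Z.of_nat Pos.of_succ_nat Pos.succ].

Ltac eqbs := repeat match goal with |- context [Z.eqb ?a ?b] => destruct (Z.eqb_spec a b) end.

Lemma even_ne x y : Z.even x = true -> Z.even y = false -> x <> y.
Proof. intros H1 H2 ->. congruence. Qed.

Lemma N2_K m x : N2 (2 + m) x = K m x.
Proof. revert x. induction m; intros x.
 - unfold N2, K. cbn [GZ Nat.add]. parsimp. unfold ind. cbn [Nat.eqb andb].
   destruct (Z.even x) eqn:E; cbn [Bool.eqb]; eqbs; cbn [andb]; try lra.
   subst. discriminate.
 - replace (2 + S m)%nat with (S (2 + m)) by lia. unfold N2 at 1. cbn [GZ]. fold N2.
   unfold K. cbn [GZ]. fold K.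
   replace (S (2 + m)) with (S (S (S m))) by lia. rewrite par2.
   destruct (Z.even _); rewrite ?IHm; [|reflexivity].
   unfold ind. replace (Nat.eqb (S (S (S m))) 2) with false by reflexivity. cbn. lra.
Qed.

Lemma N1_K m x : N1 (2 + m) x = K (2 + m) x.
Proof. revert x. induction m; intros x.
 - unfold N1, K. cbn [GZ Nat.add]. parsimp. unfold ind. cbn [Nat.eqb andb].
   destruct (Z.even x) eqn:E; cbn [Bool.eqb]; eqbs; try lra; subst; try discriminate; try lia.
 - replace (2 + S m)%nat with (S (2 + m)) by lia. unfold N1 at 1. cbn [GZ]. fold N1.
   unfold K at 1. cbn [GZ]. fold K. rewrite !IHm.
   unfold ind. replace (Nat.eqb (S (2 + m)) 1) with false by reflexivity. cbn. destruct (Z.even _); lra.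
Qed.

Fixpoint bn (n k : nat) : nat :=
  match n, k with
  | _, O => 1%nat
  | O, S _ => 0%nat
  | S n', S k' => (bn n' k' + bn n' (S k'))%nat
  end.

Lemma bn_big n k : (n < k)%nat -> bn n k = 0%nat.
Proof. revert k. induction n; intros k H; destruct k; try lia; simpl; [reflexivity|].
 rewrite !IHn by lia. reflexivity. Qed.

Lemma bn_fact n k : (k <= n)%nat -> (bn n k * fact k * fact (n - k) = fact n)%nat.
Proof. revert k. induction n; intros k H.
 - replace k with 0%nat by lia. reflexivity.
 - destruct k as [|k].
   + simpl bn. rewrite Nat.sub_0_r. simpl fact at 1. lia.
   + simpl bn. replace (S n - S k)%nat with (n - k)%nat by lia.
     destruct (Nat.eq_dec k n).
     * subst. rewrite (bn_big n (S n)) by lia. pose proof (IHn n ltac:(lia)) as E.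
       rewrite Nat.sub_diag in *. simpl fact in *. nia.
     * pose proof (IHn k ltac:(lia)) as E1. pose proof (IHn (S k) ltac:(lia)) as E2.
       replace (n - k)%nat with (S (n - S k)) in * by lia.
       change (fact (S k)) with (S k * fact k)%nat in *. change (fact (S n)) with (S n * fact n)%nat.
       change (fact (S (n - S k))) with (S (n - S k) * fact (n - S k))%nat in *.
       set (A := bn n k) in *. set (B := bn n (S k)) in *. set (f := fact k) in *.
       set (g := fact (n - S k)) in *. set (d := (n - S k)%nat) in *.
       assert (n = k + S d)%nat by lia. clearbody d. subst n.
       set (F := fact (k + S d)) in *.
       replace ((A + B) * (S k * f) * (S d * g))%nat with (S k * (A * f * (S d * g)) + S d * (B * (S k * f) * g))%nat by ring.
       rewrite E1, E2. ring.
Qed.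

Lemma K_supp T x : (Z.of_nat T + 1 < Z.abs x)%Z -> K T x = 0.
Proof. apply GZ_supp.
 - intros y Hy. unfold ind. destruct (Z.eqb_spec y 0); [lia|reflexivity].
 - reflexivity.
Qed.

Lemma K_bin T a : (a <= T)%nat -> K T (2 * Z.of_nat a - Z.of_nat T)%Z = INR (bn T a) / 2 ^ T.
Proof. revert a. induction T; intros a Ha.
 - replace a with 0%nat by lia. unfold K. simpl. unfold ind. simpl. lra.
 - unfold K. cbn [GZ]. fold K.
   replace (2 * Z.of_nat a - Z.of_nat (S T) + Z.of_nat (S T))%Z with (2 * Z.of_nat a)%Z by lia.
   rewrite Z.even_mul. simpl Z.even. cbn [orb].
   destruct a as [|a].
   + rewrite (K_supp T) by lia.
     replace (2 * Z.of_nat 0 - Z.of_nat (S T) + 1)%Z with (2 * Z.of_nat 0 - Z.of_nat T)%Z by lia.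
     rewrite IHT by lia. replace (bn T 0) with 1%nat by (destruct T; reflexivity). simpl bn. simpl pow. simpl INR. field. apply pow_nonzero. lra.
   + replace (2 * Z.of_nat (S a) - Z.of_nat (S T) - 1)%Z with (2 * Z.of_nat a - Z.of_nat T)%Z by lia.
     replace (2 * Z.of_nat (S a) - Z.of_nat (S T) + 1)%Z with (2 * Z.of_nat (S a) - Z.of_nat T)%Z by lia.
     rewrite (IHT a) by lia. simpl bn. rewrite plus_INR.
     destruct (Nat.eq_dec a T).
     * subst. rewrite (K_supp T) by lia. rewrite (bn_big T (S T)) by lia. simpl pow. change (INR 0) with 0. set (q := INR (bn T T)).
       field. apply pow_nonzero. lra.
     * rewrite (IHT (S a)) by lia. simpl pow. set (q1 := INR (bn T a)). set (q2 := INR (bn T (S a))). field. apply pow_nonzero. lra.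
Qed.


Lemma hf_S L s i : hf L (S s) i =
  if Nat.even (i mod L + S s) then
    let X1 := hf L s (i mod L + L - 1) in
    let X2 := hf L s (i mod L + 1) in
    (fun k => (fst X1 k + fst X2 k) / 2,
     fun u v => (snd X1 u v + snd X2 u v) / 2
                + (if andb (Nat.eqb u (S s)) (Nat.eqb v (i mod L)) then 1 else 0))
  else hf L s i.
Proof. reflexivity. Qed.

Lemma fst_sum L T i : (0 < L)%nat -> sumR L (fst (hf L T i)) = 1.
Proof. intros HL. revert i. induction T; intros i.
 - simpl. rewrite (sumR_ind L (i mod L) (fun _ => 1)). reflexivity. apply Nat.mod_upper_bound; lia.
 - rewrite hf_S. destruct (Nat.even _); [|apply IHT]. cbn [fst].
   unfold Rdiv. rewrite (sumR_ext _ _ (fun k => /2 * fst (hf L T (i mod L + L - 1)) k + /2 * fst (hf L T (i mod L + 1)) k)) by (intros; lra).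
   rewrite sumR_plus, !sumR_scal, !IHT. lra.
Qed.

Lemma even_mod h x : (1 <= h)%nat -> Nat.even (x mod (2*h)) = Nat.even x.
Proof. intros Hh. rewrite (Nat.div_mod x (2*h)) at 2 by lia.
 rewrite Nat.add_comm, <- Nat.mul_assoc, Nat.even_add_mul_2. reflexivity. Qed.

Lemma fst_odd h T i c : (1 <= h)%nat -> Nat.even c = false -> (1 <= T)%nat -> fst (hf (2*h) T i) c = 0.
Proof. intros Hh Hc. revert i. induction T; intros i HT; [lia|].
 rewrite hf_S. destruct (Nat.even (i mod (2*h) + S T)) eqn:E.
 - cbn [fst]. destruct T.
   + cbn [hf fst]. destruct (Nat.eqb_spec c ((i mod (2*h) + 2*h - 1) mod (2*h))) as [E1|E1];
     destruct (Nat.eqb_spec c ((i mod (2*h) + 1) mod (2*h))) as [E2|E2]; try lra.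
     * exfalso. rewrite E2, even_mod in Hc by lia. rewrite Hc in E. discriminate.
     * exfalso. rewrite E1, even_mod in Hc by lia.
       replace (i mod (2*h) + 2*h - 1)%nat with ((i mod (2*h) + 1) + 2 * (h - 1))%nat in Hc by lia.
       rewrite Nat.even_add_mul_2 in Hc. rewrite Hc in E. discriminate.
     * exfalso. rewrite E2, even_mod in Hc by lia. rewrite Hc in E. discriminate.
   + rewrite !IHT by lia. lra.
 - destruct T.
   + cbn [hf fst]. destruct (Nat.eqb_spec c (i mod (2*h))) as [E1|E1]; [|reflexivity].
     exfalso. subst c. rewrite Nat.add_1_r, Nat.even_succ, <- Nat.negb_even, Hc in E. discriminate.
   + apply IHT; lia.
Qed.

Lemma sr_eq0 h i : (1 <= h)%nat -> Z.eqb (sr h i) 0 = Nat.eqb 0 (i mod (2*h)).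
Proof. intros Hh. pose proof (modlt h i Hh). unfold sr, srr. set (r := i mod (2*h)) in *.
 destruct (Nat.leb_spec r h); match goal with |- Z.eqb ?a _ = _ => destruct (Z.eqb_spec a 0) end; destruct (Nat.eqb_spec 0 r); lia. Qed.
Lemma sr_eq1 h i : (1 <= h)%nat -> Z.eqb (sr h i) 1 = Nat.eqb 1 (i mod (2*h)).
Proof. intros Hh. pose proof (modlt h i Hh). unfold sr, srr. set (r := i mod (2*h)) in *.
 destruct (Nat.leb_spec r h); match goal with |- Z.eqb ?a _ = _ => destruct (Z.eqb_spec a 1) end; destruct (Nat.eqb_spec 1 r); lia. Qed.
Lemma sr_eqm1 h i : (2 <= h)%nat -> Z.eqb (sr h i) (-1) = Nat.eqb (2*h-1) (i mod (2*h)).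
Proof. intros Hh. pose proof (modlt h i ltac:(lia)). unfold sr, srr. set (r := i mod (2*h)) in *.
 destruct (Nat.leb_spec r h); match goal with |- Z.eqb ?a _ = _ => destruct (Z.eqb_spec a (-1)) end; destruct (Nat.eqb_spec (2*h-1) r); lia. Qed.

Lemma A_K h T i : (T + 3 <= h)%nat -> fst (hf (2*h) T i) 0%nat = K T (sr h i).
Proof. intros HT. assert (Hh3 : (3 <= h)%nat) by lia. unfold K. revert T HT i.
 apply (lift h (fun T i => fst (hf (2*h) T i) 0%nat)).
 - intros i. simpl. unfold ind. rewrite sr_eq0 by lia. reflexivity.
 - intros s i. rewrite hf_S. destruct (Nat.even _); cbn [fst]; [lra|reflexivity].
 - intros x Hx. unfold ind. destruct (Z.eqb_spec x 0); [lia|reflexivity].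
 - reflexivity.
Qed.

Lemma N2_mod h T i : (T + 3 <= h)%nat -> snd (hf (2*h) T i) 2%nat 0%nat = N2 T (sr h i).
Proof. intros HT. assert (Hh3 : (3 <= h)%nat) by lia. unfold N2. revert T HT i.
 apply (lift h (fun T i => snd (hf (2*h) T i) 2%nat 0%nat)).
 - intros i. reflexivity.
 - intros s i. rewrite hf_S. destruct (Nat.even _); cbn [snd]; [|reflexivity].
   unfold ind. rewrite sr_eq0 by lia. rewrite (Nat.eqb_sym (S s) 2). reflexivity.
 - reflexivity.
 - intros u x Hx. unfold ind. destruct (Z.eqb_spec x 0); [lia|]. rewrite Bool.andb_false_r. reflexivity.
Qed.

Lemma N1_mod h T i : (T + 3 <= h)%nat ->
  (snd (hf (2*h) T i) 1%nat 1%nat + snd (hf (2*h) T i) 1%nat (2*h-1)%nat) / 2 = N1 T (sr h i).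
Proof. intros HT. assert (Hh3 : (3 <= h)%nat) by lia. unfold N1. revert T HT i.
 apply (lift h (fun T i => (snd (hf (2*h) T i) 1%nat 1%nat + snd (hf (2*h) T i) 1%nat (2*h-1)%nat) / 2)).
 - intros i. simpl. lra.
 - intros s i. rewrite hf_S. destruct (Nat.even _); cbn [snd]; [|reflexivity].
   unfold ind. rewrite sr_eq1, sr_eqm1 by lia. rewrite (Nat.eqb_sym (S s) 1).
   destruct (Nat.eqb 1 (S s)); destruct (Nat.eqb 1 _); destruct (Nat.eqb (2*h-1) _); cbn [andb]; lra.
 - reflexivity.
 - intros u x Hx. unfold ind. destruct (Z.eqb_spec x 1); [lia|]. destruct (Z.eqb_spec x (-1)); [lia|]. lra.
Qed.


Lemma hf2_0 h : (3 <= h)%nat ->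
  (forall k, fst (hf (2*h) 2 0) k = (ind (Nat.eqb k (2*h-2)) + 2 * ind (Nat.eqb k 0) + ind (Nat.eqb k 2)) / 4) /\
  (forall u v, snd (hf (2*h) 2 0) u v = (ind (Nat.eqb u 1 && Nat.eqb v (2*h-1)) + ind (Nat.eqb u 1 && Nat.eqb v 1)) / 2
                                      + ind (Nat.eqb u 2 && Nat.eqb v 0)).
Proof. intros Hh.
 assert (m0 : (0 mod (2*h) = 0)%nat) by (apply Nat.Div0.mod_0_l).
 assert (m1 : ((0 + 2*h - 1) mod (2*h) = 2*h-1)%nat) by (apply Nat.mod_small; lia).
 assert (m2 : ((0 + 1) mod (2*h) = 1)%nat) by (apply Nat.mod_small; lia).
 assert (m3 : ((2*h - 1 + 2*h - 1) mod (2*h) = 2*h-2)%nat).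
 { replace (2*h - 1 + 2*h - 1)%nat with ((2*h-2) + 1 * (2*h))%nat by lia. rewrite Nat.Div0.mod_add. apply Nat.mod_small; lia. }
 assert (m4 : ((2*h - 1 + 1) mod (2*h) = 0)%nat).
 { replace (2*h - 1 + 1)%nat with (0 + 1 * (2*h))%nat by lia. rewrite Nat.Div0.mod_add. apply Nat.Div0.mod_0_l. }
 assert (m5 : ((1 + 2*h - 1) mod (2*h) = 0)%nat).
 { replace (1 + 2*h - 1)%nat with (0 + 1 * (2*h))%nat by lia. rewrite Nat.Div0.mod_add. apply Nat.Div0.mod_0_l. }
 assert (m6 : ((1 + 1) mod (2*h) = 2)%nat) by (apply Nat.mod_small; lia).
 assert (e1 : Nat.even (2*h - 1 + 1) = true) by (replace (2*h-1+1)%nat with (2*h)%nat by lia; apply Nat.even_even).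
 rewrite (hf_S (2*h) 1 0), m0. change (Nat.even (0+2)) with true. cbv zeta.
 rewrite (hf_S (2*h) 0 (0 + 2*h - 1)), (hf_S (2*h) 0 (0+1)), m1, m2, e1. change (Nat.even (1+1)) with true.
 cbv zeta. cbn [hf fst snd]. rewrite m3, m4, m5, m6. split.
 - intros k. unfold ind. destruct (Nat.eqb k _); destruct (Nat.eqb k 0); destruct (Nat.eqb k 2); lra.
 - intros u v. unfold ind. destruct (Nat.eqb u 1); destruct (Nat.eqb u 2); destruct (Nat.eqb v _); destruct (Nat.eqb v 1);
   destruct (Nat.eqb v 0); cbn [andb]; lra.
Qed.

Lemma sumR_ind' n p c : (p < n)%nat -> sumR n (fun i => if Nat.eqb i p then c else 0) = c.
Proof. intros. apply (sumR_ind n p (fun _ => c)). auto. Qed.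

Lemma sumR_ltcount n p : sumR n (fun k => if Nat.ltb k p then 1 else 0) = INR (Nat.min n p).
Proof. induction n; [reflexivity|]. simpl sumR. rewrite IHn. destruct (Nat.ltb_spec n p).
 - replace (Nat.min (S n) p) with (S (Nat.min n p)) by lia. rewrite S_INR. lra.
 - replace (Nat.min (S n) p) with (Nat.min n p) by lia. lra.
Qed.

Lemma wlem h i : (3 <= h)%nat -> (i < 2*h)%nat ->
  /4 * INR (Nat.min i (2*h-2)) + /4 * INR (Nat.min i 2) - /4 * INR i
  = /2 - /2 * ind (Nat.eqb i 0) - /4 * ind (Nat.eqb i 1) - /4 * ind (Nat.eqb i (2*h-1)).
Proof. intros Hh Hi. unfold ind.
 destruct (Nat.eqb_spec i 0); destruct (Nat.eqb_spec i 1); destruct (Nat.eqb_spec i (2*h-1)); try lia.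
 - subst. replace (Nat.min 0 (2*h-2)) with 0%nat by lia. replace (Nat.min 0 2) with 0%nat by lia. simpl INR. lra.
 - subst. replace (Nat.min 1 (2*h-2)) with 1%nat by lia. replace (Nat.min 1 2) with 1%nat by lia. simpl INR. lra.
 - replace (Nat.min i (2*h-2)) with (i-1)%nat by lia. replace (Nat.min i 2) with 2%nat by lia.
   rewrite minus_INR by lia. simpl INR. lra.
 - replace (Nat.min i (2*h-2)) with i by lia. replace (Nat.min i 2) with 2%nat by lia. simpl INR. lra.
Qed.

Lemma EL_reduce h N X : (3 <= h)%nat -> (2 <= N)%nat -> sumR (2*h) (fst X) = 0 -> fst X 1%nat = 0 -> fst X (2*h-1)%nat = 0 ->
  EL (2*h) N X (fsub (hZ (2*h) 2 0) (hZ (2*h) 0 0))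
  = -/2 * fst X 0%nat + /2 * (/2 * (snd X 1%nat (2*h-1)%nat + snd X 1%nat 1%nat) + snd X 2%nat 0%nat).
Proof. intros Hh HN HS H1 H2.
 assert (hz : forall T, hZ (2*h) T 0 = hf (2*h) T 0) by (intros; unfold hZ; rewrite Zmod_0_l; reflexivity).
 rewrite !hz. destruct (hf2_0 h Hh) as [F Sn].
 set (Y := fsub (hf (2*h) 2 0) (hf (2*h) 0 0)).
 assert (fY : forall k, fst Y k = /4 * ind (Nat.eqb k (2*h-2)) + /4 * ind (Nat.eqb k 2) - /2 * ind (Nat.eqb k 0)).
 { intros k. unfold Y, fsub. cbn [fst]. rewrite F. cbn [hf fst]. rewrite Nat.Div0.mod_0_l. unfold ind.
   destruct (Nat.eqb k _); destruct (Nat.eqb k 0); destruct (Nat.eqb k 2); lra. }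
 assert (sY : forall u v, snd Y u v = (ind (Nat.eqb u 1 && Nat.eqb v (2*h-1)) + ind (Nat.eqb u 1 && Nat.eqb v 1)) / 2
                                      + ind (Nat.eqb u 2 && Nat.eqb v 0)).
 { intros u v. unfold Y, fsub. cbn [snd]. rewrite Sn. cbn [hf snd]. lra. }
 assert (cY : forall l, cum (2*h) (fst Y) l = /4 * (if Nat.ltb l (2*h-2) then 1 else 0) + /4 * (if Nat.ltb l 2 then 1 else 0)).
 { intros l. unfold cum.
   rewrite (sumR_ext _ _ (fun i => (if Nat.eqb i (2*h-2) then /4 * (if Nat.ltb l (2*h-2) then 1 else 0) else 0)
      + (if Nat.eqb i 2 then /4 * (if Nat.ltb l 2 then 1 else 0) else 0) + (if Nat.eqb i 0 then 0 else 0))).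
   - rewrite !sumR_plus, !sumR_ind' by lia. lra.
   - intros i _. rewrite fY. unfold ind.
     repeat match goal with |- context [Nat.eqb ?a ?b] => destruct (Nat.eqb_spec a b) end; subst; try lia;
     repeat match goal with |- context [Nat.ltb ?a ?b] => destruct (Nat.ltb_spec a b) end; try lia; lra. }
 assert (sumcY : sumR (2*h) (cum (2*h) (fst Y)) = INR (2*h) / 4).
 { rewrite (sumR_ext _ _ _ (fun l _ => cY l)). rewrite sumR_plus, !sumR_scal, !sumR_ltcount.
   replace (Nat.min (2*h) (2*h-2)) with (2*h-2)%nat by lia. replace (Nat.min (2*h) 2) with 2%nat by lia.
   rewrite <- Rmult_plus_distr_l, <- plus_INR. replace (2*h-2+2)%nat with (2*h)%nat by lia. lra. }
 assert (HL : INR (2*h) <> 0) by (apply not_0_INR; lia).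
 set (v := fun k => /4 * (if Nat.ltb k (2*h-2) then 1 else 0) + /4 * (if Nat.ltb k 2 then 1 else 0) - /4).
 assert (P1 : sumR (2*h) (fun k => sumR (2*h) (fun l => cum (2*h) (fst X) k * cum (2*h) (fst Y) l *
               ((if Nat.eqb k l then 1 else 0) - / INR (2*h))))
            = sumR (2*h) (fun k => sumR (2*h) (fun i => if Nat.ltb k i then fst X i * v k else 0))).
 { apply sumR_ext. intros k Hk.
   rewrite (sumR_ext _ _ (fun l => (if Nat.eqb l k then cum (2*h) (fst X) k * cum (2*h) (fst Y) k else 0)
                                   + (- (cum (2*h) (fst X) k * / INR (2*h))) * cum (2*h) (fst Y) l)).
   - rewrite sumR_plus, sumR_ind', sumR_scal, sumcY by lia.
     transitivity (v k * cum (2*h) (fst X) k).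
     + rewrite cY. unfold v. field. exact HL.
     + unfold cum. rewrite <- sumR_scal. apply sumR_ext. intros i _. destruct (Nat.ltb k i); lra.
   - intros l _. destruct (Nat.eqb_spec l k); destruct (Nat.eqb_spec k l); subst; try lia; lra. }
 assert (P2 : sumR (2*h) (fun k => sumR (2*h) (fun i => if Nat.ltb k i then fst X i * v k else 0)) = -/2 * fst X 0%nat).
 { rewrite sumR_swap.
   rewrite (sumR_ext _ _ (fun i => /2 * fst X i + (if Nat.eqb i 0 then -/2 * fst X i else 0)
          + (if Nat.eqb i 1 then -/4 * fst X i else 0) + (if Nat.eqb i (2*h-1) then -/4 * fst X i else 0))).
   - rewrite !sumR_plus, sumR_scal, HS.
     rewrite (sumR_ind _ 0 (fun i => -/2 * fst X i)), (sumR_ind _ 1 (fun i => -/4 * fst X i)),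
       (sumR_ind _ (2*h-1) (fun i => -/4 * fst X i)) by lia. rewrite H1, H2. lra.
   - intros i Hi.
     rewrite sumR_trunc by lia. rewrite sumR_scal.
     assert (Sv : sumR i v = /4 * INR (Nat.min i (2*h-2)) + /4 * INR (Nat.min i 2) - /4 * INR i).
     { unfold v. unfold Rminus. rewrite !sumR_plus, !sumR_scal, !sumR_ltcount, sumR_const. lra. }
     rewrite Sv, wlem by lia. unfold ind.
     destruct (Nat.eqb i 0); destruct (Nat.eqb i 1); destruct (Nat.eqb i (2*h-1)); lra. }
 assert (P3 : sumR N (fun u => sumR (2*h) (fun v0 => / 2 * snd X (S u) v0 * snd Y (S u) v0))
            = /2 * (/2 * (snd X 1%nat (2*h-1)%nat + snd X 1%nat 1%nat) + snd X 2%nat 0%nat)).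
 { rewrite (sumR_ext _ _ (fun u => (if Nat.eqb u 0 then /4 * (snd X 1%nat (2*h-1)%nat + snd X 1%nat 1%nat) else 0)
                                  + (if Nat.eqb u 1 then /2 * snd X 2%nat 0%nat else 0))).
   - rewrite sumR_plus, !sumR_ind' by lia. lra.
   - intros u _.
     rewrite (sumR_ext _ _ (fun w => (if Nat.eqb w (2*h-1) then /4 * ind (Nat.eqb u 0) * snd X (S u) (2*h-1)%nat else 0)
        + (if Nat.eqb w 1 then /4 * ind (Nat.eqb u 0) * snd X (S u) 1%nat else 0)
        + (if Nat.eqb w 0 then /2 * ind (Nat.eqb u 1) * snd X (S u) 0%nat else 0))).
     + rewrite !sumR_plus, !sumR_ind' by lia. unfold ind.
       destruct (Nat.eqb_spec u 0); destruct (Nat.eqb_spec u 1); subst; try lia; lra.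
     + intros w _. rewrite sY. unfold ind.
       repeat match goal with |- context [Nat.eqb ?a ?b] => destruct (Nat.eqb_spec a b) end; subst; try lia;
       cbn [andb]; try lra. }
 unfold EL. fold Y. rewrite P1, P2, P3. reflexivity.
Qed.


Lemma srj h j : (1 <= h)%nat -> (Z.abs j < Z.of_nat h)%Z -> sr h (Z.to_nat (j mod Z.of_nat (2*h))) = j.
Proof. intros Hh Hj.
 assert (Hm : (0 <= j mod Z.of_nat (2*h) < Z.of_nat (2*h))%Z) by (apply Z.mod_pos_bound; lia).
 unfold sr. rewrite Nat.mod_small by lia. unfold srr.
 destruct (Z_le_gt_dec 0 j).
 - rewrite Z.mod_small by lia. destruct (Nat.leb_spec (Z.to_nat j) h); lia.
 - assert (E : (j mod Z.of_nat (2*h) = j + Z.of_nat (2*h))%Z).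
   { rewrite <- (Z_mod_plus_full j 1). rewrite Z.mul_1_l. apply Z.mod_small. lia. }
   rewrite E. destruct (Nat.leb_spec (Z.to_nat (j + Z.of_nat (2*h))) h); lia.
Qed.

Lemma sumR_minus n f g : sumR n (fun i => f i - g i) = sumR n f - sumR n g.
Proof. induction n; simpl; [lra|]. rewrite IHn; lra. Qed.

Lemma g11_K s j : Z.Even j -> g11 s j = 2 * K (2*s) j.
Proof. intros [m ->]. unfold g11. destruct (Z.leb_spec (Z.abs (2*m)) (2 * Z.of_nat s)).
 - rewrite (Z.mul_comm 2 m), Z_div_mult by lia.
   set (a := Z.to_nat (Z.of_nat s + m)).
   replace (Z.to_nat (Z.of_nat s - m)) with (2*s - a)%nat by lia.
   replace (m * 2)%Z with (2 * Z.of_nat a - Z.of_nat (2*s))%Z by lia.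
   rewrite K_bin by lia. pose proof (bn_fact (2*s) a ltac:(lia)) as E.
   rewrite <- E, !mult_INR. rewrite pow_mult. replace (2^2) with 4 by (simpl; lra).
   pose proof (INR_fact_neq_0 a). pose proof (INR_fact_neq_0 (2*s-a)). pose proof (pow_nonzero 4 s ltac:(lra)).
   field. auto.
 - rewrite K_supp by lia. lra.
Qed.

Theorem proposition1 (t : nat) (j : Z) :
  (1 <= t)%nat -> Z.Even j ->
  Un_cv
    (fun n => EL (2 * n + 2) (2 * t + 2)
                 (fsub (hZ (2 * n + 2) (2 * t + 2) j) (hZ (2 * n + 2) (2 * t) j))
                 (fsub (hZ (2 * n + 2) 2 0) (hZ (2 * n + 2) 0 0)))
    (- / 4 * (g11 (t - 1) j - g11 t j)).
Proof. intros Ht Hj eps Heps. exists (2*t + 5 + Z.to_nat (Z.abs j))%nat. intros n Hn.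
 replace (2 * n + 2)%nat with (2 * (n+1))%nat by lia. set (h := (n+1)%nat).
 assert (Hh : (2*t + 6 <= h)%nat) by lia. assert (Hjh : (Z.abs j < Z.of_nat h)%Z) by lia.
 set (r := Z.to_nat (j mod Z.of_nat (2*h))).
 assert (hr : forall T, hZ (2*h) T j = hf (2*h) T r) by reflexivity.
 rewrite !hr. set (X := fsub (hf (2*h) (2*t+2) r) (hf (2*h) (2*t) r)).
 assert (HS : sumR (2*h) (fst X) = 0).
 { unfold X, fsub. cbn [fst]. rewrite sumR_minus, !fst_sum by lia. lra. }
 assert (H1 : fst X 1%nat = 0).
 { unfold X, fsub. cbn [fst]. rewrite !fst_odd by (reflexivity || lia). lra. }
 assert (H2 : fst X (2*h-1)%nat = 0).
 { unfold X, fsub. cbn [fst].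
   assert (Nat.even (2*h-1) = false).
   { replace (2*h-1)%nat with (2*(h-1)+1)%nat by lia. apply Nat.even_odd. }
   rewrite !fst_odd by (assumption || lia). lra. }
 rewrite (EL_reduce h (2*t+2) X) by (assumption || lia).
 unfold X, fsub. cbn [fst snd].
 rewrite !A_K by lia. rewrite !N2_mod by lia.
 assert (E1 : forall T, (T + 3 <= h)%nat -> snd (hf (2*h) T r) 1%nat (2*h-1)%nat + snd (hf (2*h) T r) 1%nat 1%nat
                = 2 * N1 T (sr h r)).
 { intros T HT. rewrite <- N1_mod by lia. lra. }
 replace (snd (hf (2 * h) (2 * t + 2) r) 1%nat (2 * h - 1)%nat - snd (hf (2 * h) (2 * t) r) 1%nat (2 * h - 1)%nat +
     (snd (hf (2 * h) (2 * t + 2) r) 1%nat 1%nat - snd (hf (2 * h) (2 * t) r) 1%nat 1%nat))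
   with (2 * N1 (2*t+2) (sr h r) - 2 * N1 (2*t) (sr h r)) by (rewrite <- !E1 by lia; lra).
 unfold r. rewrite srj by lia.
 replace (2*t+2)%nat with (2 + 2*t)%nat by lia.
 assert (Ea : N1 (2*t) j = K (2*t) j).
 { replace (2*t)%nat with (2 + (2*t-2))%nat by lia. apply N1_K. }
 assert (Eb : N2 (2*t) j = K (2*t-2) j).
 { replace (2*t)%nat with (2 + (2*t-2))%nat at 1 by lia. apply N2_K. }
 rewrite Ea, Eb, !N1_K, !N2_K. rewrite !g11_K by assumption.
 replace (2 * (t-1))%nat with (2*t-2)%nat by lia.
 replace (2 + (2*t-2))%nat with (2*t)%nat by lia.
 unfold R_dist. match goal with |- Rabs ?a < _ => replace a with 0 by lra end. rewrite Rabs_R0. exact Heps.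
Qed.
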